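(* Let $\mathcal P$ and $\mathrm{conv}(\mathcal P)$ be as in the context. Let $\alpha,\beta,s_{\max}$ be integers such that (a) $L\le s_{\max}\le\min\{T-2,\lfloor(\overline C-\overline V)/V\rfloor\}$, (b) $0\le\alpha<\beta\le s_{\max}$, and (c) $\beta=\alpha+1$ or $s_{\max}\le L+\alpha$. Let $\mathcal S=[0,\alpha]_{\mathbb Z}\cup[\beta,s_{\max}]_{\mathbb Z}$. For any $t\in[s_{\max}+2,T]_{\mathbb Z}$, the inequality $$x_t\le\overline C y_t-\sum_{s\in\mathcal S}(\overline C-\overline V-sV)(y_{t-s}-y_{t-s-1})$$ is valid and facet-defining for $\mathrm{conv}(\mathcal P)$. For any $t\in[1,T-s_{\max}-1]_{\mathbb Z}$, the inequality $$x_t\le\overline C y_t-\sum_{s\in\mathcal S}(\overline C-\overline V-sV)(y_{t+s}-y_{t+s+1})$$ is valid and facet-defining for $\mathrm{conv}(\mathcal P)$.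
   Context: For integers $a,b$, $[a,b]_{\mathbb Z}=\{a,a+1,\dots,b\}$ if $a\le b$ and $\emptyset$ otherwise. Fix a positive integer $T$, positive integers $L$ (minimum up time) and $\ell$ (minimum down time), and reals $\overline C,\underline C,V,\overline V$ with $\overline C>\underline C>0$, $V>0$, $\overline V+V\le\overline C$ and $\underline C<\overline V<\underline C+V$. $\mathcal P$ is the set of $(\mathbf x,\mathbf y)=((x_1,\dots,x_T),(y_1,\dots,y_T))\in\mathbb R_+^T\times\{0,1\}^T$ satisfying: (i) $-y_{t-1}+y_t-y_k\le 0$ for all $t\in[2,T]_{\mathbb Z}$, $k\in[t,\min\{T,t+L-1\}]_{\mathbb Z}$; (ii) $y_{t-1}-y_t+y_k\le 1$ for all $t\in[2,T]_{\mathbb Z}$, $k\in[t,\min\{T,t+\ell-1\}]_{\mathbb Z}$; (iii) $-x_t+\underline C y_t\le 0$ and $x_t-\overline C y_t\le 0$ for all $t\in[1,T]_{\mathbb Z}$; (iv) $x_t-x_{t-1}\le Vy_{t-1}+\overline V(1-y_{t-1})$ for all $t\in[2,T]_{\mathbb Z}$; (v) $x_{t-1}-x_t\le Vy_t+\overline V(1-y_t)$ for all $t\in[2,T]_{\mathbb Z}$. $\mathrm{conv}(\mathcal P)\subseteq\mathbb R^{2T}$ is its convex hull. A linear inequality is valid for $\mathrm{conv}(\mathcal P)$ if all its points satisfy it, and facet-defining if moreover the set of points of $\mathrm{conv}(\mathcal P)$ satisfying it with equality has dimension $\dim\mathrm{conv}(\mathcal P)-1$. *)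

(* Defs.v *)
From mathcomp Require Import all_boot all_order all_algebra.
From mathcomp Require Import reals.
Set Implicit Arguments. Unset Strict Implicit. Unset Printing Implicit Defensive.
Import Order.TTheory GRing.Theory Num.Theory.
Local Open Scope ring_scope.

(* A point (x, y) of R^T x R^T, stored as two T-tuples.
   Coordinates are indexed 1..T as in the paper: X p t = x_t, Y p t = y_t. *)
Definition point (R : realType) (T : nat) := (T.-tuple R * T.-tuple R)%type.

Definition X (R : realType) (T : nat) (p : point R T) (t : nat) : R :=
  nth 0 (tval p.1) t.-1.
Definition Y (R : realType) (T : nat) (p : point R T) (t : nat) : R :=
  nth 0 (tval p.2) t.-1.

Definition inP (R : realType) (T L l : nat) (Cb Cl V Vb : R) (p : point R T) : Prop :=
  (forall t, (1 <= t <= T)%N -> 0 <= X p t) /\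
  (forall t, (1 <= t <= T)%N -> Y p t = 0 \/ Y p t = 1) /\
  (forall t k, (2 <= t <= T)%N -> (t <= k <= minn T (t + L - 1))%N ->
      - Y p t.-1 + Y p t - Y p k <= 0) /\
  (forall t k, (2 <= t <= T)%N -> (t <= k <= minn T (t + l - 1))%N ->
      Y p t.-1 - Y p t + Y p k <= 1) /\
  (forall t, (1 <= t <= T)%N -> - X p t + Cl * Y p t <= 0 /\ X p t - Cb * Y p t <= 0) /\
  (forall t, (2 <= t <= T)%N ->
      X p t - X p t.-1 <= V * Y p t.-1 + Vb * (1 - Y p t.-1)) /\
  (forall t, (2 <= t <= T)%N ->
      X p t.-1 - X p t <= V * Y p t + Vb * (1 - Y p t)).

Definition conv (R : realType) (T : nat) (S : point R T -> Prop) (p : point R T) : Prop :=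
  exists (k : nat) (q : 'I_k -> point R T) (lam : 'I_k -> R),
    (forall i, S (q i)) /\ (forall i, 0 <= lam i) /\ \sum_(i < k) lam i = 1 /\
    (forall t, (1 <= t <= T)%N ->
       X p t = \sum_(i < k) lam i * X (q i) t /\
       Y p t = \sum_(i < k) lam i * Y (q i) t).

Definition aff_indep (R : realType) (T : nat) (k : nat) (q : 'I_k -> point R T) : Prop :=
  forall lam : 'I_k -> R,
    \sum_(i < k) lam i = 0 ->
    (forall t, (1 <= t <= T)%N ->
       \sum_(i < k) lam i * X (q i) t = 0 /\ \sum_(i < k) lam i * Y (q i) t = 0) ->
    forall i, lam i = 0.

(* max_aff S k : the maximum number of affinely independent points of S is k,
   i.e. dim S = k - 1 (with dim of the empty set = -1). *)
Definition max_aff (R : realType) (T : nat) (S : point R T -> Prop) (k : nat) : Prop :=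
  (exists q : 'I_k -> point R T, (forall i, S (q i)) /\ aff_indep q) /\
  (forall q : 'I_k.+1 -> point R T, (forall i, S (q i)) -> ~ aff_indep q).

Definition valid_ineq (R : realType) (T : nat) (K : point R T -> Prop)
  (lhs rhs : point R T -> R) : Prop :=
  forall p, K p -> lhs p <= rhs p.

(* Valid and facet-defining: the face where equality holds has dimension dim K - 1. *)
Definition facet_defining (R : realType) (T : nat) (K : point R T -> Prop)
  (lhs rhs : point R T -> R) : Prop :=
  valid_ineq K lhs rhs /\
  exists k : nat, max_aff K k.+1 /\ max_aff (fun p => K p /\ lhs p = rhs p) k.

(* Main.v *)
Require Import Defs.
From mathcomp Require Import all_boot all_order all_algebra.
From mathcomp Require Import reals.
From mathcomp Require Import zify ring lra.
Set Implicit Arguments. Unset Strict Implicit. Unset Printing Implicit Defensive.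
Import Order.TTheory GRing.Theory Num.Theory.
Local Open Scope ring_scope.


Lemma aff_dep (R : realType) (T k : nat) (q : 'I_k -> point R T) :
  ((T + T).+2 <= k)%N -> ~ aff_indep q.
Proof.
move=> hk hind.
pose A := \matrix_(i < k, j < (T+T).+1)
  (if (j == 0 :> nat)%N then 1 else if (j <= T)%N then X (q i) j else Y (q i) (j - T)).
have : kermx A != 0.
  rewrite kermx_eq0 /row_free; apply/negP => /eqP hr.
  have := rank_leq_col A; rewrite hr; lia.
case/matrix0Pn => i0 [j0 hne].
pose lam : 'I_k -> R := fun j => kermx A i0 j.
have hv : row i0 (kermx A) *m A = 0 by rewrite -row_mul mulmx_ker row0.
have col : forall c : 'I_(T+T).+1, \sum_(j < k) lam j * A j c = 0.
  move=> c; have := congr1 (fun M : 'M[R]_(1, (T+T).+1) => M 0 c) hv; rewrite !mxE => h.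
  apply: (etrans _ h); apply: eq_bigr => j _.
  by rewrite /lam [in RHS]mxE.
have := hind lam _ _ j0; rewrite /lam => hl; move: hne; rewrite hl ?eqxx //.
- have := col ord0; rewrite /A.
  under eq_bigr => j _ do rewrite mxE /= mulr1.
  by [].
- move=> t ht; split.
  + have ht' : (t < (T+T).+1)%N by lia.
    have := col (Ordinal ht'); rewrite /A.
    under eq_bigr => j _ do rewrite mxE /=.
    have -> : (t == 0)%N = false by lia.
    by have -> : (t <= T)%N = true by lia.
  + have ht' : (t + T < (T+T).+1)%N by lia.
    have := col (Ordinal ht'); rewrite /A.
    under eq_bigr => j _ do rewrite mxE /=.
    have -> : (t + T == 0)%N = false by lia.
    have -> : (t + T <= T)%N = false by lia.
    by under eq_bigr => j _ do rewrite addnK.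
Qed.


Definition tup (R : realType) (T : nat) (f : nat -> R) : T.-tuple R :=
  @Tuple T R (mkseq f T) (introT eqP (size_mkseq f T)).
Definition mkpt (R : realType) (T : nat) (fx fy : nat -> R) : point R T :=
  (tup T (fun i => fx i.+1), tup T (fun i => fy i.+1)).

Lemma X_mk (R : realType) (T : nat) (fx fy : nat -> R) t :
  (1 <= t <= T)%N -> X (mkpt T fx fy) t = fx t.
Proof. move=> ht; rewrite /X /= nth_mkseq; [congr fx; lia | lia]. Qed.
Lemma Y_mk (R : realType) (T : nat) (fx fy : nat -> R) t :
  (1 <= t <= T)%N -> Y (mkpt T fx fy) t = fy t.
Proof. move=> ht; rewrite /Y /= nth_mkseq; [congr fy; lia | lia]. Qed.

Inductive kd := KB | KX of nat | KU of nat & nat | KD of nat & nat.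

Definition kx (R : realType) (Cb V Vb : R) (k : kd) (u : nat) : R :=
  match k with
  | KB => Cb
  | KX j => if u == j then Cb - V else Cb
  | KU m r => if (m <= u)%N then Vb + (minn (u - m) r)%:R * V else 0
  | KD m r => if (u < m)%N then Vb + (minn (m.-1 - u) r)%:R * V else 0
  end.
Definition ky (R : realType) (k : kd) (u : nat) : R :=
  match k with
  | KB | KX _ => 1
  | KU m _ => ((m <= u)%N)%:R
  | KD m _ => ((u < m)%N)%:R
  end.
Definition pt (R : realType) (T : nat) (Cb V Vb : R) (k : kd) : point R T :=
  mkpt T (kx Cb V Vb k) (ky R k).

Lemma mulV_le (R : realType) (V : R) a b : 0 < V -> (a <= b)%N -> a%:R * V <= b%:R * V.
Proof. by move=> hV hab; rewrite ler_pM2r // ler_nat. Qed.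
Lemma natS (R : realType) (V : R) b : (b.+1)%:R * V = b%:R * V + V.
Proof. by rewrite -addn1 natrD mulrDl mul1r. Qed.
Lemma nat0 (R : realType) (V : R) : (0%N)%:R * V = 0.
Proof. by rewrite mul0r. Qed.

Lemma pt_inP (R : realType) (T L l : nat) (Cb Cl V Vb : R) k :
  Cl < Cb -> 0 < Cl -> 0 < V -> Vb + V <= Cb -> Cl < Vb ->
  (forall m r, (k = KU m r \/ k = KD m r) -> Vb + r%:R * V <= Cb) ->
  inP L l Cb Cl V Vb (pt T Cb V Vb k).
Proof.
move=> h1 h2 hV h4 h5 hk.
have XE t : (1 <= t <= T)%N -> X (pt T Cb V Vb k) t = kx Cb V Vb k t.
  by move=> ht; rewrite /pt X_mk.
have YE t : (1 <= t <= T)%N -> Y (pt T Cb V Vb k) t = ky R k t.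
  by move=> ht; rewrite /pt Y_mk.
have g0 (a : nat) : 0 <= a%:R * V by apply: mulr_ge0; rewrite ?ler0n ?ltW.
have gm (a r : nat) : (minn a r)%:R * V <= r%:R * V by apply: mulV_le => //; lia.
have ym (b : bool) : (b%:R : R) = 0 \/ (b%:R : R) = 1 by case: b; [right|left].
rewrite /inP; split; [|split;[|split;[|split;[|split;[|split]]]]].
- move=> t ht; rewrite XE //.
  case: k hk XE YE => [|j|m r|m r] hk XE YE /=; try lra.
  + by case: ifP => _; lra.
  + by case: ifP => _; [have := g0 (minn (t - m) r); lra | lra].
  + by case: ifP => _; [have := g0 (minn (m.-1 - t) r); lra | lra].
- move=> t ht; rewrite YE //.
  by case: k hk XE YE => [|j|m r|m r] hk XE YE /=; try (by right); apply: ym.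
- move=> t kk ht hkk; rewrite !YE; try lia.
  case: k hk XE YE => [|j|m r|m r] hk XE YE /=; try lra.
  + case: (leqP m t.-1) => ?; case: (leqP m t) => ?; case: (leqP m kk) => ? /=; try lra; lia.
  + case: (ltnP t.-1 m) => ?; case: (ltnP t m) => ?; case: (ltnP kk m) => ? /=; try lra; lia.
- move=> t kk ht hkk; rewrite !YE; try lia.
  case: k hk XE YE => [|j|m r|m r] hk XE YE /=; try lra.
  + case: (leqP m t.-1) => ?; case: (leqP m t) => ?; case: (leqP m kk) => ? /=; try lra; lia.
  + case: (ltnP t.-1 m) => ?; case: (ltnP t m) => ?; case: (ltnP kk m) => ? /=; try lra; lia.
- move=> t ht; rewrite XE // YE //.
  case: k hk XE YE => [|j|m r|m r] hk XE YE /=; try lra.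
  + by case: ifP => _; lra.
  + have hr := hk m r (or_introl erefl).
    have := gm (t - m)%N r; have := g0 (minn (t - m) r).
    by case: (leqP m t) => ? /=; lra.
  + have hr := hk m r (or_intror erefl).
    have := gm (m.-1 - t)%N r; have := g0 (minn (m.-1 - t) r).
    by case: (ltnP t m) => ? /=; lra.
- move=> t ht; rewrite !XE ?YE; try lia.
  case: k hk XE YE => [|j|m r|m r] hk XE YE /=; try lra.
  + by case: ifP => ?; case: ifP => ? ; try lra; lia.
  + have := g0 (minn (t.-1 - m) r).
    case: (leqP m t.-1) => ?; case: (leqP m t) => ? /=; try lra; try lia.
    * have : (minn (t - m) r)%:R * V <= (minn (t.-1 - m) r)%:R * V + V.
        by rewrite -natS; apply: mulV_le => //; lia.
      lra.
    * have -> : (t - m = 0)%N by lia.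
      by rewrite min0n nat0; lra.
  + have := g0 (minn (m.-1 - t) r); have := g0 (minn (m.-1 - t.-1) r).
    case: (ltnP t.-1 m) => ?; case: (ltnP t m) => ? /=; try lra; try lia.
    have : (minn (m.-1 - t) r)%:R * V <= (minn (m.-1 - t.-1) r)%:R * V.
      by apply: mulV_le => //; lia.
    lra.
- move=> t ht; rewrite !XE ?YE; try lia.
  case: k hk XE YE => [|j|m r|m r] hk XE YE /=; try lra.
  + by case: ifP => ?; case: ifP => ? ; try lra; lia.
  + have := g0 (minn (t - m) r); have := g0 (minn (t.-1 - m) r).
    case: (leqP m t.-1) => ?; case: (leqP m t) => ? /=; try lra; try lia.
    have : (minn (t.-1 - m) r)%:R * V <= (minn (t - m) r)%:R * V.
      by apply: mulV_le => //; lia.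
    lra.
  + have := g0 (minn (m.-1 - t) r); have := g0 (minn (m.-1 - t.-1) r).
    case: (ltnP t.-1 m) => ?; case: (ltnP t m) => ? /=; try lra; try lia.
    * have : (minn (m.-1 - t.-1) r)%:R * V <= (minn (m.-1 - t) r)%:R * V + V.
        by rewrite -natS; apply: mulV_le => //; lia.
      lra.
    * have -> : (m.-1 - t.-1 = 0)%N by lia.
      by rewrite min0n nat0; lra.
Qed.


Definition rhsf (R : realType) (T : nat) (Cb V Vb : R) (S : nat -> bool) (smax t : nat)
  (i1 i2 : nat -> nat) (p : point R T) : R :=
  Cb * Y p t - \sum_(0 <= s < smax.+1 | S s) (Cb - Vb - s%:R * V) * (Y p (i1 s) - Y p (i2 s)).

Lemma rhs_lin (R : realType) (T : nat) (Cb V Vb : R) S smax t i1 i2 k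
  (lam : 'I_k -> R) (q : 'I_k -> point R T) :
  \sum_i lam i * rhsf Cb V Vb S smax t i1 i2 (q i) =
  Cb * (\sum_i lam i * Y (q i) t) -
  \sum_(0 <= s < smax.+1 | S s) (Cb - Vb - s%:R * V) *
     ((\sum_i lam i * Y (q i) (i1 s)) - (\sum_i lam i * Y (q i) (i2 s))).
Proof.
rewrite /rhsf; under eq_bigr do rewrite mulrBr; rewrite sumrB; congr (_ - _).
  by rewrite mulr_sumr; apply: eq_bigr => i _; rewrite mulrCA.
under eq_bigr do rewrite mulr_sumr.
rewrite exchange_big /=; apply: eq_bigr => s _.
rewrite -sumrB mulr_sumr; apply: eq_bigr => i _; rewrite -mulrBr; ring.
Qed.

Lemma valid_conv (R : realType) (T L l : nat) (Cb Cl V Vb : R) S smax t i1 i2 :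
  (1 <= t <= T)%N ->
  (forall s, (s <= smax)%N -> (1 <= i1 s <= T)%N /\ (1 <= i2 s <= T)%N) ->
  (forall p : point R T, inP L l Cb Cl V Vb p -> X p t <= rhsf Cb V Vb S smax t i1 i2 p) ->
  valid_ineq (conv (inP L l Cb Cl V Vb)) (fun p : point R T => X p t) (@rhsf R T Cb V Vb S smax t i1 i2).
Proof.
move=> ht hi hv p [k [q [lam [hq [hl [hs hc]]]]]].
have [-> _] := hc t ht.
apply: le_trans (_ : \sum_i lam i * rhsf Cb V Vb S smax t i1 i2 (q i) <= _).
  by apply: ler_sum => i _; apply: ler_wpM2l => //; apply: hv.
rewrite rhs_lin /rhsf; have [_ ->] := hc t ht; apply: lerB => //.
rewrite le_eqVlt; apply/orP; left; apply/eqP.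
rewrite big_nat_cond [RHS]big_nat_cond; apply: eq_bigr => s /andP[/andP[_ hs'] _].
have [h1 h2] := hi s (ltac:(lia)).
by have [_ ->] := hc _ h1; have [_ ->] := hc _ h2.
Qed.

Lemma wl n (j : 'I_n) : widen_ord (leqnSn n) j = lift ord_max j.
Proof. by apply: ord_inj; rewrite lift_max. Qed.

Lemma face_dep (R : realType) (T : nat) (f : point R T -> R) (p0 : point R T) :
  (forall k (lam : 'I_k -> R) (q : 'I_k -> point R T), \sum_i lam i = 0 ->
     (forall t, (1 <= t <= T)%N -> \sum_i lam i * X (q i) t = 0 /\ \sum_i lam i * Y (q i) t = 0) ->
     \sum_i lam i * f (q i) = 0) ->
  f p0 != 0 ->
  forall n (q : 'I_n -> point R T), ((T+T).+1 <= n)%N -> (forall i, f (q i) = 0) -> ~ aff_indep q.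
Proof.
move=> hlin hp0 n q hn hq hind.
pose q' : 'I_n.+1 -> point R T :=
  fun i => if unlift ord_max i is Some j then q j else p0.
have q'l j : q' (widen_ord (leqnSn _) j) = q j by rewrite /q' wl liftK.
have q'm : q' ord_max = p0 by rewrite /q' unlift_none.
apply: (aff_dep (q := q')); first by lia.
move=> lam hs hc.
have hm : lam ord_max = 0.
  have := hlin _ lam q' hs hc; rewrite big_ord_recr /= q'm.
  rewrite big1 ?add0r; last by move=> i _; rewrite q'l hq mulr0.
  by move/eqP; rewrite mulf_eq0 (negbTE hp0) orbF => /eqP.
pose lam' := fun j : 'I_n => lam (widen_ord (leqnSn _) j).
have h0 : forall j, lam' j = 0.
  apply: hind.
  - by move: hs; rewrite big_ord_recr /= hm addr0.
  - move=> t ht; have [h1 h2] := hc t ht.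
    rewrite big_ord_recr /= hm mul0r addr0 in h1.
    rewrite big_ord_recr /= hm mul0r addr0 in h2.
    split; [apply: etrans h1 | apply: etrans h2]; apply: eq_bigr => j _.
      by rewrite q'l.
    by rewrite q'l.
move=> i; case: (unliftP ord_max i) => [j ->|->] //.
by have := h0 j; rewrite /lam' wl.
Qed.


Definition fam (nX : nat) (jf : nat -> nat) (ch : nat -> kd) (i : nat) : kd :=
  if i == 0%N then KB else if (i <= nX)%N then KX (jf i) else ch (i - nX + 1)%N.

Lemma sum_single (R : realType) k (F : 'I_k -> R) (i0 : 'I_k) :
  (forall i, i != i0 -> F i = 0) -> \sum_i F i = F i0.
Proof.
move=> h; rewrite (bigD1 i0) //= big1; first by rewrite addr0.
by move=> i /h.
Qed.

Lemma fam_indep (R : realType) (T : nat) (Cb V Vb : R) (nX : nat) (jf : nat -> nat)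
  (ch : nat -> kd) k :
  k = (nX + T).+1 -> (0 < T)%N -> 0 < V ->
  (forall i, (1 <= i <= nX)%N -> (1 <= jf i <= T)%N) ->
  (forall i i', (1 <= i <= nX)%N -> (1 <= i' <= nX)%N -> jf i = jf i' -> i = i') ->
  (forall m, (2 <= m <= T.+1)%N -> exists r, ch m = KU m r \/ ch m = KD m r) ->
  (exists r, ch T.+1 = KU T.+1 r) ->
  aff_indep (fun i : 'I_k => pt T Cb V Vb (fam nX jf ch i)).
Proof.
move=> hk hT hV hjr hji hch hlast lam hs hc.
pose Q := fun i : 'I_k => pt T Cb V Vb (fam nX jf ch i).
rewrite -/Q in hc.
have XE i t : (1 <= t <= T)%N -> X (Q i) t = kx Cb V Vb (fam nX jf ch i) t.
  by move=> ht; rewrite /Q /pt X_mk.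
have YE i t : (1 <= t <= T)%N -> Y (Q i) t = ky R (fam nX jf ch i) t.
  by move=> ht; rewrite /Q /pt Y_mk.
have hy t : (1 <= t <= T)%N -> \sum_i lam i * (ky R (fam nX jf ch i) t - 1) = 0.
  move=> ht; have [_ h] := hc t ht.
  under eq_bigr do rewrite mulrBr mulr1.
  rewrite sumrB hs subr0 -[RHS]h; apply: eq_bigr => i _; by rewrite YE.
have ord_of n : (n < k)%N -> exists i0 : 'I_k, val i0 = n.
  by move=> hn; exists (Ordinal hn).
have step2 : forall m, (2 <= m <= T)%N -> forall i : 'I_k, nat_of_ord i = (m + nX - 1)%N -> lam i = 0.
  move=> m hm i0 hi0.
  have h := hy m.-1 ltac:(lia); have h' := hy m ltac:(lia).
  have : \sum_i lam i * (ky R (fam nX jf ch i) m.-1 - ky R (fam nX jf ch i) m) = 0.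
    apply: etrans (_ : \sum_i (lam i * (ky R (fam nX jf ch i) m.-1 - 1) -
                               lam i * (ky R (fam nX jf ch i) m - 1)) = 0).
      by apply: eq_bigr => i _; ring.
    by rewrite sumrB h h' subrr.
  rewrite (sum_single (i0 := i0)).
  - rewrite /fam hi0.
    have -> : (m + nX - 1 == 0)%N = false by lia.
    have -> : (m + nX - 1 <= nX)%N = false by lia.
    have -> : (m + nX - 1 - nX + 1 = m)%N by lia.
    have [r [-> | ->]] := hch m ltac:(lia) => /=.
    + have -> : (m <= m.-1)%N = false by lia.
      rewrite leqnn /= => /eqP; rewrite mulf_eq0 => /orP[/eqP //|]; lra.
    + have -> : (m.-1 < m)%N = true by lia.
      rewrite ltnn /= => /eqP; rewrite mulf_eq0 => /orP[/eqP //|]; lra.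
  - move=> i hne; rewrite /fam.
    case: ifP => [_ /=|h0]; first by rewrite subrr mulr0.
    case: ifP => [_ /=|h1]; first by rewrite subrr mulr0.
    have hne' : (nat_of_ord i <> m + nX - 1)%N by move=> e; move: hne; rewrite -(inj_eq val_inj) /= e hi0 eqxx.
    have hi : (nat_of_ord i < k)%N := ltn_ord i.
    have [r [-> | ->]] := hch (nat_of_ord i - nX + 1)%N ltac:(lia) => /=.
    + have -> : ((i - nX + 1 <= m.-1) = (i - nX + 1 <= m))%N by lia.
      by rewrite subrr mulr0.
    + have -> : ((m.-1 < i - nX + 1) = (m < i - nX + 1))%N by lia.
      by rewrite subrr mulr0.
have step3 : forall i0 : 'I_k, nat_of_ord i0 = (T + nX)%N -> lam i0 = 0.
  move=> i0 hi0; have := hy T ltac:(lia).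
  rewrite (sum_single (i0 := i0)).
  - rewrite /fam hi0.
    have -> : (T + nX == 0)%N = false by lia.
    have -> : (T + nX <= nX)%N = false by lia.
    have -> : (T + nX - nX + 1 = T.+1)%N by lia.
    have [r ->] := hlast => /=.
    rewrite ltnn /= => /eqP; rewrite mulf_eq0 => /orP[/eqP //|]; lra.
  - move=> i hne; rewrite /fam.
    case: ifP => [_ /=|h0]; first by rewrite subrr mulr0.
    case: ifP => [_ /=|h1]; first by rewrite subrr mulr0.
    have hne' : (nat_of_ord i <> T + nX)%N by move=> e; move: hne; rewrite -(inj_eq val_inj) /= e hi0 eqxx.
    have hi : (nat_of_ord i < k)%N := ltn_ord i.
    by rewrite (step2 (i - nX + 1)%N) ?mul0r //; lia.
have ypts : forall i : 'I_k, (nX < i)%N -> lam i = 0.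
  move=> i hi; have hi' : (nat_of_ord i < k)%N := ltn_ord i.
  case: (leqP (i - nX + 1) T) => h.
  - by apply: (step2 (i - nX + 1)%N) => /=; lia.
  - by apply: step3 => /=; lia.
have xpts : forall i : 'I_k, (1 <= i <= nX)%N -> lam i = 0.
  move=> i0 hi0.
  have hj := hjr _ hi0.
  have [h _] := hc _ hj.
  have : \sum_i lam i * (kx Cb V Vb (fam nX jf ch i) (jf i0) - Cb) = 0.
    under eq_bigr do rewrite mulrBr.
    rewrite sumrB -mulr_suml hs mul0r subr0 -[RHS]h; apply: eq_bigr => i _.
    by rewrite XE.
  rewrite (sum_single (i0 := i0)).
  - rewrite /fam.
    have -> : (i0 == 0 :> nat)%N = false by lia.
    rewrite ifT /=; last by lia.
    rewrite eqxx => /eqP; rewrite mulf_eq0 => /orP[/eqP //|]; lra.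
  - move=> i hne; rewrite /fam.
    case: ifP => [_ /=|h0]; first by rewrite subrr mulr0.
    case: ifP => [h1 /=|h1].
    + case: ifP => [/eqP e|_]; last by rewrite subrr mulr0.
      have := hji i i0 ltac:(lia) hi0 (esym e) => /val_inj e'.
      by move: hne; rewrite e' eqxx.
    + by rewrite ypts ?mul0r //; lia.
move=> i.
case: (posnP i) => h0; last first.
  case: (leqP i nX) => h1; first by apply: xpts; lia.
  by apply: ypts.
have : \sum_i lam i = 0 := hs.
rewrite (sum_single (i0 := i)) //.
move=> i' hne.
case: (leqP i' nX) => h1; last by apply: ypts.
apply: xpts; apply/andP; split => //.
rewrite lt0n; apply/negP => /eqP e; move: hne.
have -> : i' = i by apply: val_inj; rewrite /= e h0.
by rewrite eqxx.
Qed.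


Definition SS (alpha beta : nat) (s : nat) : bool := (s <= alpha)%N || (beta <= s)%N.

Lemma valid1 (R : realType) (T L l : nat) (Cb Cl V Vb : R) (alpha beta smax t : nat)
  (p : point R T) :
  0 < V -> smax%:R * V <= Cb - Vb ->
  (alpha < beta)%N -> (beta <= smax)%N -> (beta = alpha.+1 \/ (smax <= L + alpha)%N) ->
  (smax + 2 <= t <= T)%N ->
  inP L l Cb Cl V Vb p ->
  X p t <= rhsf Cb V Vb (SS alpha beta) smax t (fun s => t - s)%N (fun s => t - s - 1)%N p.
Proof.
move=> hV hcs hab hbs hc ht [hx0 [hyb [hup [hdn [hcap [hru hrd]]]]]].
pose c := fun s : nat => Cb - Vb - s%:R * V.
pose D := fun s : nat => Y p (t - s) - Y p (t - s - 1).
pose W := fun k => \sum_(k <= s < smax.+1 | SS alpha beta s) c s * D s.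
pose C := fun k : nat => if (k <= smax)%N then c k else 0.
have cge k : (k <= smax)%N -> 0 <= c k.
  move=> hk; have : k%:R * V <= smax%:R * V by apply: mulV_le.
  rewrite /c; lra.
have cdec k : (C k.+1 <= C k).
  rewrite /C; case: (leqP k.+1 smax) => h1.
    rewrite ifT; last by lia.
    by rewrite /c natS; lra.
  by case: ifP => h2 //; apply: cge.
have Cge k : 0 <= C k by rewrite /C; case: ifP => // /cge.
have Wstep k : (k <= smax)%N -> W k = (if SS alpha beta k then c k * D k else 0) + W k.+1.
  move=> hk; rewrite /W big_ltn_cond; last by lia.
  by case: ifP => //; rewrite add0r.
have Wend : W smax.+1 = 0 by rewrite /W big_geq.
have yb tau : (1 <= tau <= T)%N -> Y p tau = 0 \/ Y p tau = 1 by apply: hyb.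
have Dk k : (t - k - 1 = t - k.+1)%N by lia.
have hP : forall n k, (k + n = smax.+1)%N ->
    (Y p (t - k) = 0 -> W k <= 0) /\ (Y p (t - k) = 1 -> W k <= C k).
  elim=> [|n IH] k hk.
    rewrite addn0 in hk; subst k; rewrite Wend; split => // _.
  have hks : (k <= smax)%N by lia.
  have [IH0 IH1] := IH k.+1 ltac:(lia).
  rewrite (Wstep k hks) /D Dk.
  have := yb (t - k.+1)%N ltac:(lia); have := yb (t - k)%N ltac:(lia).
  have ck := cge k hks; have Ck : C k = c k by rewrite /C hks.
  case=> hk0; case=> h1; rewrite hk0 h1; split=> e; first [by exfalso; lra | idtac].
  - have := IH0 h1; case: ifP => _; lra.
  -
    case: ifP => hS.
      have := IH1 h1; have := cdec k; lra.
    move: hS; rewrite /SS => /norP [/negbTE ha /negbTE hb].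
    have hL : (smax <= L + alpha)%N by case: hc => // e2; lia.
    have run : forall j, (k.+1 <= j <= smax.+1)%N -> Y p (t - j) = 1.
      elim=> [|j IHj] hj; first by lia.
      case: (leqP j k) => hjk.
        by have -> : j.+1 = k.+1 by lia.
      have hyj := IHj ltac:(lia).
      have := yb (t - j.+1)%N ltac:(lia); case=> // h0.
      have := hup (t - j)%N (t - k)%N ltac:(lia) ltac:(lia).
      have -> : (t - j).-1 = (t - j.+1)%N by lia.
      rewrite h0 hyj hk0; lra.
    suff -> : W k.+1 = 0 by lra.
    rewrite /W big_nat_cond big1 // => s /andP[/andP[hs1 hs2] _].
    rewrite /D Dk (run s) ?(run s.+1) ?subrr ?mulr0 //; lia.
  - have := IH0 h1; rewrite Ck; case: ifP => _; lra.
  - have := IH1 h1; rewrite Ck; have := cdec k; case: ifP => _; lra.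
have ramp : forall k, (k <= smax)%N -> Y p (t - k.+1) = 0 ->
    (forall j, (j <= k)%N -> Y p (t - j) = 1) -> X p t <= Vb + k%:R * V.
  move=> k hk h0 h1.
  have : forall i, (i <= k)%N -> X p (t - k + i) <= Vb + i%:R * V.
    elim=> [|i IHi] hi.
      rewrite addn0.
      have := hru (t - k)%N ltac:(lia).
      have -> : (t - k).-1 = (t - k.+1)%N by lia.
      have [_ h2] := hcap (t - k.+1)%N ltac:(lia).
      rewrite h0 in h2 *; lra.
    have := hru (t - k + i.+1)%N ltac:(lia).
    have -> : (t - k + i.+1).-1 = (t - k + i)%N by lia.
    have -> : (t - k + i)%N = (t - (k - i))%N by lia.
    rewrite h1; last by lia.
    have := IHi ltac:(lia); rewrite natS.
    have -> : (t - (k - i))%N = (t - k + i)%N by lia.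
    lra.
  by move/(_ k (leqnn k)); have -> : (t - k + k = t)%N by lia.
have hQ : forall n k, (k + n = smax.+1)%N ->
    (forall j, (j <= k)%N -> Y p (t - j) = 1) -> X p t + W k <= Cb.
  elim=> [|n IH] k hk hy.
    rewrite addn0 in hk; subst k; rewrite Wend addr0.
    have [_ h2] := hcap t ltac:(lia); have h3 := hy 0%N isT; rewrite subn0 in h3.
    rewrite h3 in h2; lra.
  have hks : (k <= smax)%N by lia.
  rewrite (Wstep k hks) /D Dk.
  have := yb (t - k.+1)%N ltac:(lia); case=> h1.
    have [IH0 _] := hP n k.+1 ltac:(lia).
    have := IH0 h1; have := ramp k hks h1 hy; rewrite h1 hy //.
    have [_ h2] := hcap t ltac:(lia); have h3 := hy 0%N isT; rewrite subn0 in h3.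
    rewrite h3 in h2.
    rewrite /c; case: ifP => _; lra.
  have := IH k.+1 ltac:(lia).
  have hy' : forall j, (j <= k.+1)%N -> Y p (t - j) = 1.
    move=> j hj; case: (leqP j k) => hjk; first exact: hy.
    by have -> : j = k.+1 by lia.
  move/(_ hy') => hIH.
  rewrite h1 hy // subrr mulr0; case: ifP => _; lra.
rewrite /rhsf -/(W 0%N).
have := yb t ltac:(lia); case=> ht0.
  have [_ h2] := hcap t ltac:(lia); have [h3 _] := hP smax.+1 0%N ltac:(lia).
  rewrite subn0 in h3; have := h3 ht0; rewrite ht0 in h2 *; lra.
have := hQ smax.+1 0%N ltac:(lia).
rewrite ht0.
have hy0 : forall j, (j <= 0)%N -> Y p (t - j) = 1.
  move=> j hj; have -> : j = 0%N by lia.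
  by rewrite subn0.
move/(_ hy0); lra.
Qed.

Lemma valid2 (R : realType) (T L l : nat) (Cb Cl V Vb : R) (alpha beta smax t : nat)
  (p : point R T) :
  0 < V -> smax%:R * V <= Cb - Vb ->
  (alpha < beta)%N -> (beta <= smax)%N -> (beta = alpha.+1 \/ (smax <= L + alpha)%N) ->
  (1 <= t)%N -> (t + smax + 1 <= T)%N ->
  inP L l Cb Cl V Vb p ->
  X p t <= rhsf Cb V Vb (SS alpha beta) smax t (fun s => t + s)%N (fun s => t + s + 1)%N p.
Proof.
move=> hV hcs hab hbs hc ht1 ht2 [hx0 [hyb [hup [hdn [hcap [hru hrd]]]]]].
pose c := fun s : nat => Cb - Vb - s%:R * V.
pose D := fun s : nat => Y p (t + s) - Y p (t + s + 1).
pose W := fun k => \sum_(k <= s < smax.+1 | SS alpha beta s) c s * D s.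
pose C := fun k : nat => if (k <= smax)%N then c k else 0.
have cge k : (k <= smax)%N -> 0 <= c k.
  move=> hk; have : k%:R * V <= smax%:R * V by apply: mulV_le.
  rewrite /c; lra.
have cdec k : (C k.+1 <= C k).
  rewrite /C; case: (leqP k.+1 smax) => h1.
    rewrite ifT; last by lia.
    by rewrite /c natS; lra.
  by case: ifP => h2 //; apply: cge.
have Cge k : 0 <= C k by rewrite /C; case: ifP => // /cge.
have Wstep k : (k <= smax)%N -> W k = (if SS alpha beta k then c k * D k else 0) + W k.+1.
  move=> hk; rewrite /W big_ltn_cond; last by lia.
  by case: ifP => //; rewrite add0r.
have Wend : W smax.+1 = 0 by rewrite /W big_geq.
have yb tau : (1 <= tau <= T)%N -> Y p tau = 0 \/ Y p tau = 1 by apply: hyb.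
have Dk k : (t + k + 1 = t + k.+1)%N by lia.
have hP : forall n k, (k + n = smax.+1)%N ->
    (Y p (t + k) = 0 -> W k <= 0) /\ (Y p (t + k) = 1 -> W k <= C k).
  elim=> [|n IH] k hk.
    rewrite addn0 in hk; subst k; rewrite Wend; split => // _.
  have hks : (k <= smax)%N by lia.
  have [IH0 IH1] := IH k.+1 ltac:(lia).
  rewrite (Wstep k hks) /D Dk.
  have := yb (t + k.+1)%N ltac:(lia); have := yb (t + k)%N ltac:(lia).
  have ck := cge k hks; have Ck : C k = c k by rewrite /C hks.
  case=> hk0; case=> h1; rewrite hk0 h1; split=> e; first [by exfalso; lra | idtac].
  - have := IH0 h1; case: ifP => _; lra.
  -
    case: ifP => hS.
      have := IH1 h1; have := cdec k; lra.
    move: hS; rewrite /SS => /norP [/negbTE ha /negbTE hb].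
    have hL : (smax <= L + alpha)%N by case: hc => // e2; lia.
    have run : forall j, (k.+1 <= j <= smax.+1)%N -> Y p (t + j) = 1.
      move=> j hj.
      have := hup (t + k.+1)%N (t + j)%N ltac:(lia) ltac:(lia).
      have -> : (t + k.+1).-1 = (t + k)%N by lia.
      rewrite hk0 h1; have := yb (t + j)%N ltac:(lia); case=> ->; lra.
    suff -> : W k.+1 = 0 by lra.
    rewrite /W big_nat_cond big1 // => s /andP[/andP[hs1 hs2] _].
    rewrite /D Dk (run s) ?(run s.+1) ?subrr ?mulr0 //; lia.
  - have := IH0 h1; rewrite Ck; case: ifP => _; lra.
  - have := IH1 h1; rewrite Ck; have := cdec k; case: ifP => _; lra.
have ramp : forall k, (k <= smax)%N -> Y p (t + k.+1) = 0 ->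
    (forall j, (j <= k)%N -> Y p (t + j) = 1) -> X p t <= Vb + k%:R * V.
  move=> k hk h0 h1.
  have : forall i, (i <= k)%N -> X p (t + k - i) <= Vb + i%:R * V.
    elim=> [|i IHi] hi.
      rewrite subn0.
      have := hrd (t + k.+1)%N ltac:(lia).
      have -> : (t + k.+1).-1 = (t + k)%N by lia.
      have [_ h2] := hcap (t + k.+1)%N ltac:(lia).
      rewrite h0 in h2 *; lra.
    have := hrd (t + k - i)%N ltac:(lia).
    have -> : (t + k - i).-1 = (t + k - i.+1)%N by lia.
    have -> : (t + k - i)%N = (t + (k - i))%N by lia.
    rewrite h1; last by lia.
    have := IHi ltac:(lia); rewrite natS.
    have -> : (t + (k - i))%N = (t + k - i)%N by lia.
    lra.
  by move/(_ k (leqnn k)); have -> : (t + k - k = t)%N by lia.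
have hQ : forall n k, (k + n = smax.+1)%N ->
    (forall j, (j <= k)%N -> Y p (t + j) = 1) -> X p t + W k <= Cb.
  elim=> [|n IH] k hk hy.
    rewrite addn0 in hk; subst k; rewrite Wend addr0.
    have [_ h2] := hcap t ltac:(lia); have h3 := hy 0%N isT; rewrite addn0 in h3.
    rewrite h3 in h2; lra.
  have hks : (k <= smax)%N by lia.
  rewrite (Wstep k hks) /D Dk.
  have := yb (t + k.+1)%N ltac:(lia); case=> h1.
    have [IH0 _] := hP n k.+1 ltac:(lia).
    have := IH0 h1; have := ramp k hks h1 hy; rewrite h1 hy //.
    have [_ h2] := hcap t ltac:(lia); have h3 := hy 0%N isT; rewrite addn0 in h3.
    rewrite h3 in h2.
    rewrite /c; case: ifP => _; lra.
  have := IH k.+1 ltac:(lia).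
  have hy' : forall j, (j <= k.+1)%N -> Y p (t + j) = 1.
    move=> j hj; case: (leqP j k) => hjk; first exact: hy.
    by have -> : j = k.+1 by lia.
  move/(_ hy') => hIH.
  rewrite h1 hy // subrr mulr0; case: ifP => _; lra.
rewrite /rhsf -/(W 0%N).
have := yb t ltac:(lia); case=> ht0.
  have [_ h2] := hcap t ltac:(lia); have [h3 _] := hP smax.+1 0%N ltac:(lia).
  rewrite addn0 in h3; have := h3 ht0; rewrite ht0 in h2 *; lra.
have := hQ smax.+1 0%N ltac:(lia).
rewrite ht0.
have hy0 : forall j, (j <= 0)%N -> Y p (t + j) = 1.
  move=> j hj; have -> : j = 0%N by lia.
  by rewrite addn0.
move/(_ hy0); lra.
Qed.


Lemma sum_nat_single (R : realType) (F : nat -> R) (P : pred nat) n s0 :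
  (forall s, (s < n)%N -> s != s0 -> F s = 0) ->
  \sum_(0 <= s < n | P s) F s = if (s0 < n)%N && P s0 then F s0 else 0.
Proof.
move=> h; rewrite big_mkcond /=.
case: (ltnP s0 n) => hs /=.
  rewrite (bigD1_seq s0) ?mem_index_iota ?iota_uniq //=.
  rewrite big1_seq ?addr0 // => s /andP[hne]; rewrite mem_index_iota => hr.
  by case: ifP => // _; apply: h => //; lia.
rewrite big1_seq // => s /andP[_]; rewrite mem_index_iota => hr.
by case: ifP => // _; apply: h => //; apply/eqP; lia.
Qed.

Lemma rhs_pt (R : realType) (T : nat) (Cb V Vb : R) S smax t i1 i2 kd :
  (1 <= t <= T)%N ->
  (forall s, (s <= smax)%N -> (1 <= i1 s <= T)%N /\ (1 <= i2 s <= T)%N) ->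
  rhsf Cb V Vb S smax t i1 i2 (pt T Cb V Vb kd) =
  Cb * ky R kd t - \sum_(0 <= s < smax.+1 | S s) (Cb - Vb - s%:R * V) *
       (ky R kd (i1 s) - ky R kd (i2 s)).
Proof.
move=> ht hi; rewrite /rhsf /pt Y_mk //; congr (_ - _).
rewrite big_nat_cond [RHS]big_nat_cond; apply: eq_bigr => s /andP[/andP[_ hs] _].
by have [h1 h2] := hi s ltac:(lia); rewrite !Y_mk.
Qed.

Definition ch1 (alpha beta smax t : nat) (m : nat) : kd :=
  if (t < m)%N then KU m 0
  else if SS alpha beta (t - m) && (t - m <= smax)%N then KU m (t - m) else KD m 0.

Lemma tight1 (R : realType) (T : nat) (Cb V Vb : R) (alpha beta smax t : nat) kd :
  (smax + 2 <= t <= T)%N ->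
  (kd = KB \/ (exists j, kd = KX j /\ j != t) \/
     (exists m, (2 <= m <= T.+1)%N /\ kd = ch1 alpha beta smax t m)) ->
  X (pt T Cb V Vb kd) t =
  rhsf Cb V Vb (SS alpha beta) smax t (fun s => t - s)%N (fun s => t - s - 1)%N (pt T Cb V Vb kd).
Proof.
move=> ht hk.
have hi : forall s, (s <= smax)%N -> (1 <= t - s <= T)%N /\ (1 <= t - s - 1 <= T)%N.
  by move=> s hs; split; lia.
rewrite rhs_pt //; last by lia.
rewrite /pt X_mk; last by lia.
case: hk => [->|[[j [-> hj]]|[m [hm ->]]]] /=.
- rewrite big1; first lra.
  by move=> s _; ring.
- rewrite eq_sym (negbTE hj) big1; first lra.
  by move=> s _; ring.
- rewrite /ch1; case: (ltnP t m) => htm /=.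
    have -> : (m <= t)%N = false by lia.
    rewrite big1 /= ?mulr0 ?subr0 // => s _.
    have -> : (m <= t - s)%N = false by lia.
    have -> : (m <= t - s - 1)%N = false by lia.
    by rewrite /=; ring.
  case: ifP => /= hS.
    rewrite htm (@sum_nat_single _ _ _ _ (t - m)%N).
      move: hS => /andP[hS1 hS2].
      have -> : (t - m < smax.+1)%N by lia.
      rewrite hS1 /=.
      have -> : (m <= t - (t - m))%N = true by lia.
      have -> : (m <= t - (t - m) - 1)%N = false by lia.
      rewrite minnn /=; lra.
    move=> s hs hne.
    have -> : (m <= t - s - 1)%N = (m <= t - s)%N by move/eqP: hne; lia.
    by ring.
  have -> : (t < m)%N = false by lia.
  rewrite (@sum_nat_single _ _ _ _ (t - m)%N).
    have -> : ((t - m < smax.+1)%N && SS alpha beta (t - m)) = false.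
      apply/negbTE/negP => /andP[h1 h2]; move: hS; rewrite h2 /=.
      by have -> : (t - m <= smax)%N by lia.
    rewrite /=; lra.
  move=> s hs hne.
  have -> : (t - s - 1 < m)%N = (t - s < m)%N by move/eqP: hne; lia.
  by ring.
Qed.

Definition ch2 (alpha beta smax t : nat) (m : nat) : kd :=
  if (m <= t)%N then KD m 0
  else if SS alpha beta (m - t - 1) && (m - t - 1 <= smax)%N then KD m (m - t - 1) else KU m 0.

Lemma tight2 (R : realType) (T : nat) (Cb V Vb : R) (alpha beta smax t : nat) kd :
  (1 <= t)%N -> (t + smax + 1 <= T)%N ->
  (kd = KB \/ (exists j, kd = KX j /\ j != t) \/
     (exists m, (2 <= m <= T.+1)%N /\ kd = ch2 alpha beta smax t m)) ->
  X (pt T Cb V Vb kd) t =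
  rhsf Cb V Vb (SS alpha beta) smax t (fun s => t + s)%N (fun s => t + s + 1)%N (pt T Cb V Vb kd).
Proof.
move=> ht1 ht2 hk.
have hi : forall s, (s <= smax)%N -> (1 <= t + s <= T)%N /\ (1 <= t + s + 1 <= T)%N.
  by move=> s hs; split; lia.
rewrite rhs_pt //; last by lia.
rewrite /pt X_mk; last by lia.
case: hk => [->|[[j [-> hj]]|[m [hm ->]]]] /=.
- rewrite big1; first lra.
  by move=> s _; ring.
- rewrite eq_sym (negbTE hj) big1; first lra.
  by move=> s _; ring.
- rewrite /ch2; case: (leqP m t) => htm /=.
    have -> : (t < m)%N = false by lia.
    rewrite big1 /= ?mulr0 ?subr0 // => s _.
    have -> : (t + s < m)%N = false by lia.
    have -> : (t + s + 1 < m)%N = false by lia.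
    by rewrite /=; ring.
  case: ifP => /= hS.
    rewrite htm (@sum_nat_single _ _ _ _ (m - t - 1)%N).
      move: hS => /andP[hS1 hS2].
      have -> : (m - t - 1 < smax.+1)%N by lia.
      rewrite hS1 /=.
      have -> : (t + (m - t - 1) < m)%N = true by lia.
      have -> : (t + (m - t - 1) + 1 < m)%N = false by lia.
      have -> : (m.-1 - t = m - t - 1)%N by lia.
      rewrite minnn /=; lra.
    move=> s hs hne.
    have -> : (t + s + 1 < m)%N = (t + s < m)%N by move/eqP: hne; lia.
    by ring.
  have -> : (m <= t)%N = false by lia.
  rewrite (@sum_nat_single _ _ _ _ (m - t - 1)%N).
    have -> : ((m - t - 1 < smax.+1)%N && SS alpha beta (m - t - 1)) = false.
      apply/negbTE/negP => /andP[h1 h2]; move: hS; rewrite h2 /=.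
      by have -> : (m - t - 1 <= smax)%N by lia.
    rewrite /=; lra.
  move=> s hs hne.
  have -> : (m <= t + s + 1)%N = (m <= t + s)%N by move/eqP: hne; lia.
  by ring.
Qed.


Lemma in_conv (R : realType) (T : nat) (P : point R T -> Prop) p : P p -> conv P p.
Proof.
move=> hp; exists 1%N, (fun _ => p), (fun _ => 1); split => //; split.
  by move=> _; apply: ler01.
split; first by rewrite big_ord1.
by move=> t _; rewrite !big_ord1 !mul1r.
Qed.

Lemma f_lin (R : realType) (T : nat) (Cb V Vb : R) S smax t i1 i2 :
  (1 <= t <= T)%N ->
  (forall s, (s <= smax)%N -> (1 <= i1 s <= T)%N /\ (1 <= i2 s <= T)%N) ->
  forall k (lam : 'I_k -> R) (q : 'I_k -> point R T), \sum_i lam i = 0 ->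
     (forall t, (1 <= t <= T)%N -> \sum_i lam i * X (q i) t = 0 /\ \sum_i lam i * Y (q i) t = 0) ->
     \sum_i lam i * (X (q i) t - rhsf Cb V Vb S smax t i1 i2 (q i)) = 0.
Proof.
move=> ht hi k lam q hs hc.
under eq_bigr do rewrite mulrBr.
rewrite sumrB rhs_lin; have [-> ->] := hc t ht.
rewrite big_nat_cond big1 ?mulr0 ?subrr //.
move=> s /andP[/andP[_ hs'] _].
have [h1 h2] := hi s ltac:(lia).
by have [_ ->] := hc _ h1; have [_ ->] := hc _ h2; rewrite subrr mulr0.
Qed.

Lemma fam_kind (T nX : nat) (jf : nat -> nat) (ch : nat -> kd) (i : nat) :
  (i < (nX + T).+1)%N ->
  fam nX jf ch i = KB \/ (exists j', (1 <= j' <= nX)%N /\ fam nX jf ch i = KX (jf j')) \/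
  (exists m, (2 <= m <= T.+1)%N /\ fam nX jf ch i = ch m).
Proof.
move=> hi; rewrite /fam; case: ifP => h0; first by left.
case: ifP => h1; first by right; left; exists i; split => //; lia.
by right; right; exists (i - nX + 1)%N; split => //; lia.
Qed.

Lemma facet_gen (R : realType) (T L l : nat) (Cb Cl V Vb : R) S smax t i1 i2 (ch : nat -> kd) :
  (1 <= t <= T)%N -> Cl < Cb -> 0 < Cl -> 0 < V -> Vb + V <= Cb -> Cl < Vb ->
  (forall s, (s <= smax)%N -> (1 <= i1 s <= T)%N /\ (1 <= i2 s <= T)%N) ->
  (forall p : point R T, inP L l Cb Cl V Vb p -> X p t <= rhsf Cb V Vb S smax t i1 i2 p) ->
  (forall m, (2 <= m <= T.+1)%N -> exists r, (ch m = KU m r \/ ch m = KD m r) /\ Vb + r%:R * V <= Cb) ->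
  (exists r, ch T.+1 = KU T.+1 r) ->
  (forall kd, (kd = KB \/ (exists j, kd = KX j /\ j != t) \/
     (exists m, (2 <= m <= T.+1)%N /\ kd = ch m)) ->
     X (pt T Cb V Vb kd) t = rhsf Cb V Vb S smax t i1 i2 (pt T Cb V Vb kd)) ->
  facet_defining (conv (inP L l Cb Cl V Vb)) (fun p : point R T => X p t)
    (@rhsf R T Cb V Vb S smax t i1 i2).
Proof.
move=> ht h1 h2 hV h4 h5 hi hval hch hlast htight.
have memb : forall nX jf (i : nat), (i < (nX + T).+1)%N ->
    inP L l Cb Cl V Vb (pt T Cb V Vb (fam nX jf ch i)).
  move=> nX jf i hik; apply: pt_inP => // m r hmr.
  have [e|[[j' [_ e]]|[m' [hm' e]]]] := fam_kind jf ch hik; rewrite e in hmr.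
  - by case: hmr.
  - by case: hmr.
  - have [r' [[e'|e'] hr']] := hch m' hm'; rewrite e' in hmr;
      by case: hmr => [|] e2; first [discriminate | injection e2 => *; subst].
split; first exact: valid_conv.
exists (T.-1 + T).+1; split; split.
- exists (fun i : 'I_(T.-1 + T).+2 => pt T Cb V Vb (fam T id ch i)); split.
    move=> i; apply: in_conv; apply: memb; have := ltn_ord i; lia.
  apply: fam_indep => //; try lia.
  move=> m hm; have [r [e _]] := hch m hm; by exists r.
- by move=> q _; apply: aff_dep; lia.
- pose jf := fun i : nat => if (i < t)%N then i else i.+1.
  exists (fun i : 'I_(T.-1 + T).+1 => pt T Cb V Vb (fam T.-1 jf ch i)); split.
    move=> i; have hik : (i < (T.-1 + T).+1)%N := ltn_ord i.
    split; first by apply: in_conv; apply: memb.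
    apply: htight.
    have [e|[[j' [hj' e]]|[m' [hm' e]]]] := fam_kind jf ch hik; rewrite e.
    + by left.
    + right; left; exists (jf j'); split => //; rewrite /jf; case: ifP => ?; apply/eqP; lia.
    + by right; right; exists m'.
  apply: fam_indep => //; try lia.
  + by move=> i hi'; rewrite /jf; case: ifP => ?; lia.
  + by move=> i i' hi' hi''; rewrite /jf; case: ifP => ?; case: ifP => ?; lia.
  + move=> m hm; have [r [e _]] := hch m hm; by exists r.
- move=> q hq.
  apply: (face_dep (f := fun p => X p t - rhsf Cb V Vb S smax t i1 i2 p)
                   (p0 := pt T Cb V Vb (KX t))).
  + exact: f_lin.
  + rewrite rhs_pt // /pt X_mk //= eqxx big1; last by move=> s _; ring.
    apply/eqP => e; have : V = 0 by lra.
    by move=> e'; move: hV; rewrite e' ltxx.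
  + lia.
  + by move=> i; have [_ e] := hq i; rewrite e subrr.
Qed.


Lemma floor_bound (R : realType) (Cb V Vb : R) (smax : nat) :
  0 < V -> (smax%:Z <= Num.floor ((Cb - Vb) / V))%R -> smax%:R * V <= Cb - Vb.
Proof.
move=> hV; rewrite real_floor_ge_int ?num_real // -pmulrn ler_pdivlMr //.
Qed.

Theorem proposition2 (R : realType) (T L l : nat) (Cb Cl V Vb : R)
  (alpha beta smax : nat) :
  (0 < T)%N -> (0 < L)%N -> (0 < l)%N ->
  Cb > Cl -> Cl > 0 -> V > 0 -> Vb + V <= Cb -> Cl < Vb -> Vb < Cl + V ->
  (* (a) *)
  (L <= smax)%N -> (smax <= T - 2)%N ->
  (smax%:Z <= Num.floor ((Cb - Vb) / V))%R ->
  (* (b) *)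
  (alpha < beta)%N -> (beta <= smax)%N ->
  (* (c) *)
  (beta = alpha.+1 \/ (smax <= L + alpha)%N) ->
  (forall t, (smax + 2 <= t <= T)%N ->
     facet_defining (conv (inP L l Cb Cl V Vb))
       (fun p : point R T => X p t)
       (fun p : point R T => Cb * Y p t -
          \sum_(0 <= s < smax.+1 | (s <= alpha)%N || (beta <= s)%N)
             (Cb - Vb - s%:R * V) * (Y p (t - s) - Y p (t - s - 1)))) /\
  (forall t, (1 <= t <= T - smax - 1)%N ->
     facet_defining (conv (inP L l Cb Cl V Vb))
       (fun p : point R T => X p t)
       (fun p : point R T => Cb * Y p t -
          \sum_(0 <= s < smax.+1 | (s <= alpha)%N || (beta <= s)%N)
             (Cb - Vb - s%:R * V) * (Y p (t + s) - Y p (t + s + 1)))).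
Proof.
move=> hT hL hl h1 h2 hV h4 h5 h6 hLs hsT hfl hab hbs hc.
have hcs := floor_bound hV hfl.
have hr0 : Vb + 0%:R * V <= Cb by rewrite mul0r addr0; lra.
have hrs : forall r, (r <= smax)%N -> Vb + r%:R * V <= Cb.
  by move=> r hr; have := mulV_le hV hr; lra.
split => t ht.
- apply: (@facet_gen R T L l Cb Cl V Vb (SS alpha beta) smax t (fun s => t - s)%N
           (fun s => t - s - 1)%N (ch1 alpha beta smax t)) => //.
  + lia.
  + by move=> s hs; split; lia.
  + by move=> p hp; exact: (valid1 hV hcs hab hbs hc ht hp).
  + move=> m hm; rewrite /ch1; case: ifP => _; first by exists 0%N; split => //; left.
    case: ifP => [/andP[_ hs]|_]; first by exists (t - m)%N; split; [left | apply: hrs].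
    by exists 0%N; split => //; right.
  + by exists 0%N; rewrite /ch1 ifT //; lia.
  + by move=> kd hkd; apply: tight1.
- apply: (@facet_gen R T L l Cb Cl V Vb (SS alpha beta) smax t (fun s => t + s)%N
           (fun s => t + s + 1)%N (ch2 alpha beta smax t)) => //.
  + lia.
  + by move=> s hs; split; lia.
  + move=> p hp; apply: (valid2 hV hcs hab hbs hc _ _ hp); lia.
  + move=> m hm; rewrite /ch2; case: ifP => _; first by exists 0%N; split => //; right.
    case: ifP => [/andP[_ hs]|_]; first by exists (m - t - 1)%N; split; [right | apply: hrs].
    by exists 0%N; split => //; left.
  + exists 0%N; rewrite /ch2 ifF; last by lia.
    rewrite ifF //; apply/negbTE/negP => /andP[_ h]; lia.
  + by move=> kd hkd; apply: tight2 => //; lia.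
Qed.
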